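(* Let $q$ be a prime power, $m \ge 2$ an integer, $g = \gcd(q-1, m(m-1))$, and $\lambda$ a partition of $m$ such that $S_{\lambda,\mathbb{F}_q}$ is nonempty. If $\delta_1, \delta_2 \in D_{\lambda,\mathbb{F}_q}$ and $\delta_2/\delta_1$ is a $g$th power in $\mathbb{F}_q^\times$, then the number of polynomials in $S_{\lambda,\mathbb{F}_q}$ with discriminant $\delta_1$ equals the number of polynomials in $S_{\lambda,\mathbb{F}_q}$ with discriminant $\delta_2$.
   Context: For a partition $\lambda = (\lambda_1,\dots,\lambda_k)$ of $m$ (positive integers summing to $m$), a monic $f \in \mathbb{F}_q[x]$ of degree $m$ has factorization type $\lambda$ if $f = \pi_1\cdots\pi_k$ with the $\pi_i$ distinct monic irreducible polynomials and $\deg \pi_i = \lambda_i$. $S_{\lambda,\mathbb{F}_q}$ is the set of monic squarefree polynomials in $\mathbb{F}_q[x]$ of factorization type $\lambda$, and $D_{\lambda,\mathbb{F}_q} = \{\operatorname{disc}(f) : f \in S_{\lambda,\mathbb{F}_q}\}$. For $f$ of degree $m\ge 2$ with leading coefficient $a_m$ and roots $\alpha_i$ in a splitting field, $\operatorname{disc}(f) = a_m^{2m-2}\prod_{i<j}(\alpha_i-\alpha_j)^2$. *)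

(* Defs.v *)
From HB Require Import structures.
From mathcomp Require Import all_boot all_order all_algebra all_field.
From Stdlib Require Import ClassicalEpsilon.
Set Implicit Arguments. Unset Strict Implicit. Unset Printing Implicit Defensive.
Import GRing.Theory.
Local Open Scope ring_scope.

(* Classical boolean reflection of a proposition (used to count elements of
   finite sets defined by non-decidable-by-construction predicates). *)
Definition asb (P : Prop) : bool :=
  if excluded_middle_informative P then true else false.

Definition is_partition (m : nat) (lam : seq nat) : Prop :=
  all (fun k => 0 < k)%N lam /\ sumn lam = m.

Definition has_fact_type (F : fieldType) (lam : seq nat) (f : {poly F}) : Prop :=
  f \is monic /\
  exists ps : seq {poly F},
    [/\ uniq ps,
        (forall p, p \in ps -> p \is monic /\ irreducible_poly p),
        f = \prod_(p <- ps) p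
      & perm_eq [seq (size p).-1 | p : {poly F} <- ps] lam].

(* S_{lam,F}: monic squarefree polynomials of factorization type lam. *)
Definition in_S (F : fieldType) (lam : seq nat) (f : {poly F}) : Prop :=
  has_fact_type lam f.

Definition is_disc (F : fieldType) (f : {poly F}) (d : F) : Prop :=
  exists (L : fieldExtType F) (rs : seq L),
    map_poly (in_alg L) f = (lead_coef f)%:A%:P * \prod_(r <- rs) ('X - r%:P)
    /\ d%:A = (lead_coef f)%:A ^+ (2 * (size f).-1 - 2)
              * \prod_(i < size rs) \prod_(j < size rs | (i < j)%N)
                    (rs`_i - rs`_j) ^+ 2.

Definition in_D (F : fieldType) (lam : seq nat) (d : F) : Prop :=
  exists f, in_S lam f /\ is_disc f d.

Definition monic_of (F : fieldType) (m : nat) (t : m.-tuple F) : {poly F} :=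
  'X^m + \poly_(i < m) t`_i.

(* number of f in S_{lam,F} (necessarily monic of degree m) with disc(f) = d,
   counted via the bijection between m-tuples and monic degree-m polynomials *)
Definition count_S_disc (F : finFieldType) (m : nat) (lam : seq nat) (d : F) : nat :=
  #|[set t : m.-tuple F | asb (in_S lam (monic_of t) /\ is_disc (monic_of t) d)]|.

(* Main.v *)
Require Import Defs.
From HB Require Import structures.
From mathcomp Require Import all_boot all_order all_algebra all_field.
From mathcomp Require Import zify.
From Stdlib Require Import ClassicalEpsilon.
Set Implicit Arguments. Unset Strict Implicit. Unset Printing Implicit Defensive.
Import GRing.Theory.
Local Open Scope ring_scope.

Definition Sc (F : fieldType) (c : F) (p : {poly F}) : {poly F} :=
  c ^+ (size p).-1 *: (p \Po (c^-1 *: 'X)).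

Section Sc.
Variable F : fieldType.

Lemma size_sX (a : F) : a != 0 -> size (a *: 'X : {poly F}) = 2%N.
Proof. by move=> a0; rewrite size_scale // size_polyX. Qed.

Lemma size_Sc (c : F) p : c != 0 -> size (Sc c p) = size p.
Proof.
move=> c0; rewrite /Sc size_scale ?expf_neq0 //.
by rewrite size_comp_poly2 // size_sX // invr_eq0.
Qed.

Lemma lead_Sc (c : F) p : c != 0 -> lead_coef (Sc c p) = lead_coef p.
Proof.
move=> c0; rewrite /Sc lead_coefZ lead_coef_comp ?size_sX ?invr_eq0 //.
rewrite lead_coefZ lead_coefX mulr1 mulrCA -exprMn mulfV // expr1n mulr1 //.
Qed.

Lemma ScK (c : F) p : c != 0 -> Sc c^-1 (Sc c p) = p.
Proof.
move=> c0; rewrite {1}/Sc size_Sc // /Sc comp_polyZ scalerA -exprMn mulVf // expr1n scale1r.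
rewrite -comp_polyA comp_polyZ comp_polyX scalerA invrK mulVf // scale1r.
exact: comp_polyXr.
Qed.

Lemma ScM (c : F) p q : c != 0 -> Sc c (p * q) = Sc c p * Sc c q.
Proof.
move=> c0.
have [->|p0] := eqVneq p 0; first by rewrite mul0r /Sc comp_poly0 !scaler0 mul0r.
have [->|q0] := eqVneq q 0; first by rewrite mulr0 /Sc comp_poly0 !scaler0 mulr0.
rewrite /Sc size_mul // comp_polyM -scalerAl -scalerAr scalerA -exprD.
congr (_ ^+ _ *: _).
have := size_poly_gt0 p; have := size_poly_gt0 q; rewrite p0 q0.
case: (size p) => [|a] //; case: (size q) => [|b] //= _ _.
by rewrite addnS.
Qed.

Lemma Sc1 (c : F) : Sc c 1 = 1.
Proof. by rewrite /Sc size_poly1 expr0 scale1r -polyC1 comp_polyC. Qed.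

Lemma Sc_dvd (c : F) p q : c != 0 -> p %| q -> Sc c p %| Sc c q.
Proof.
move=> c0 /dvdpP [r ->]; rewrite ScM //; exact: dvdp_mulIr.
Qed.

Lemma Sc_monic (c : F) p : c != 0 -> p \is monic -> Sc c p \is monic.
Proof. by move=> c0; rewrite !monicE lead_Sc. Qed.

Lemma Sc_irr (c : F) p : c != 0 -> irreducible_poly p -> irreducible_poly (Sc c p).
Proof.
move=> c0 [sp irr]; split; first by rewrite size_Sc.
move=> q sq dq.
have ci : c^-1 != 0 by rewrite invr_eq0.
have := Sc_dvd ci dq; rewrite ScK // => dq'.
have /andP[h1 h2] : Sc c^-1 q %= p by apply: irr => //; rewrite size_Sc.
apply/andP; split=> //.
by have := Sc_dvd c0 h2; rewrite -{2}(invrK c) ScK.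
Qed.

Lemma Sc_inj (c : F) : c != 0 -> injective (Sc c).
Proof. by move=> c0 p q e; rewrite -(ScK p c0) e ScK. Qed.

End Sc.

Lemma fact_Sc (F : fieldType) (c : F) lam f : c != 0 ->
  has_fact_type lam f -> has_fact_type lam (Sc c f).
Proof.
move=> c0 [mf [ps [u hp fE pe]]]; split; first exact: Sc_monic.
exists (map (Sc c) ps); split.
- by rewrite map_inj_uniq //; exact: Sc_inj.
- move=> p /mapP [q qin ->]; have [m i] := hp q qin; split; [exact: Sc_monic | exact: Sc_irr].
- by rewrite fE big_map (big_morph _ (fun p q => ScM p q c0) (Sc1 c)).
- by rewrite -map_comp (eq_map (g := fun p : {poly F} => (size p).-1)) // => p /=; rewrite size_Sc.
Qed.

Lemma pairs_prod (R : comNzRingType) (a : R) n :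
  \prod_(i < n) \prod_(j < n | (i < j)%N) a ^+ 2 = a ^+ (n * n.-1).
Proof.
elim: n => [|n IH]; first by rewrite big_ord0 expr0.
rewrite big_ord_recr /= [X in _ * X]big1; last by move=> j; rewrite ltnNge -ltnS ltn_ord.
rewrite mulr1.
under eq_bigr => i _.
  rewrite big_mkcond big_ord_recr /= ltn_ord -big_mkcond /=.
  over.
rewrite big_split /= IH prodr_const card_ord -exprM -exprD.
congr (_ ^+ _); case: n {IH} => [|n] //=.
by rewrite mulnS mulSn; lia.
Qed.

Lemma comp_prod (K : fieldType) (a : K) (rs : seq K) : a != 0 ->
  a ^+ size rs *: ((\prod_(r <- rs) ('X - r%:P)) \Po (a^-1 *: 'X))
  = \prod_(r <- rs) ('X - (a * r)%:P).
Proof.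
move=> a0; elim: rs => [|r rs IH].
  by rewrite !big_nil expr0 scale1r -polyC1 comp_polyC.
rewrite !big_cons comp_polyM /= exprS -scalerA scalerAr IH scalerAl.
congr (_ * _).
by rewrite comp_polyB comp_polyX comp_polyC scalerBr scalerA mulfV // scale1r scale_polyC.
Qed.

Lemma disc_Sc (F : fieldType) (c : F) f d : c != 0 -> f \is monic ->
  is_disc f d -> is_disc (Sc c f) (d * c ^+ ((size f).-1 * ((size f).-1).-1)).
Proof.
move=> c0 mf [L [rs [hf hd]]].
have lf : lead_coef f = 1 by apply/eqP.
rewrite lf scale1r mul1r in hf; rewrite lf scale1r expr1n mul1r in hd.
have srs : size rs = (size f).-1.
  by rewrite -(size_map_poly (in_alg L) f) hf size_prod_XsubC.
have c0' : (c%:A : L) != 0 by rewrite -(fmorph_eq0 (in_alg L)) in c0.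
exists L, (map (fun r => c%:A * r) rs); split.
  rewrite lead_Sc // lf scale1r mul1r /Sc map_polyZ map_comp_poly hf map_polyZ map_polyX.
  rewrite rmorphXn fmorphV /= -srs comp_prod // big_map //.
rewrite lead_Sc // lf scale1r expr1n mul1r size_map.
have eM : forall a b : F, (a * b)%:A = a%:A * b%:A :> L.
  by move=> a b; rewrite -scalerA -{1}(mul1r (b%:A)) scalerAl.
have eX : forall (a : F) k, (a ^+ k)%:A = (a%:A) ^+ k :> L.
  by move=> a k; rewrite exprZn expr1n.
rewrite eM eX hd -srs -pairs_prod -big_split /=.
apply: eq_bigr => i _; rewrite -big_split /=; apply: eq_bigr => j _.
rewrite !(nth_map 0) // -mulrBr exprMn mulrC //.
Qed.

Section MO.
Variables (F : fieldType) (m : nat).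

Lemma coef_monic_of (t : m.-tuple F) i :
  (monic_of t)`_i = if i == m then 1 else if (i < m)%N then t`_i else 0.
Proof.
rewrite /monic_of coefD coefXn coef_poly.
case: eqP => [->|_]; first by rewrite ltnn addr0.
by rewrite add0r.
Qed.

Lemma size_monic_of (t : m.-tuple F) : size (monic_of t) = m.+1.
Proof.
rewrite /monic_of size_polyDl size_polyXn //.
by apply: leq_ltn_trans (size_poly _ _) _.
Qed.

Lemma monic_of_monic (t : m.-tuple F) : monic_of t \is monic.
Proof.
rewrite monicE /lead_coef size_monic_of /= coef_monic_of eqxx //.
Qed.

Lemma monic_of_inj : injective (@monic_of F m).
Proof.
move=> t1 t2 e; apply: eq_from_tnth => i.
have := congr1 (fun p : {poly F} => p`_i) e; rewrite /= !coef_monic_of.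
by rewrite (ltn_eqF (ltn_ord i)) (ltn_ord i) !(tnth_nth 0).
Qed.

Lemma monic_of_recon (p : {poly F}) : p \is monic -> size p = m.+1 ->
  monic_of [tuple p`_i | i < m] = p.
Proof.
move=> mp sp; apply/polyP => i; rewrite coef_monic_of.
case: eqP => [->|ne].
  by have := eqP mp; rewrite /lead_coef sp.
case: ltnP => [lt|ge].
  by rewrite -[i]/(nat_of_ord (Ordinal lt)) nth_mktuple.
by rewrite nth_default // sp ltn_neqAle eq_sym; apply/andP; split=> //; apply/eqP.
Qed.
End MO.

Lemma asbE (P Q : Prop) : (P <-> Q) -> asb P = asb Q.
Proof.
move=> [pq qp]; rewrite /asb.
case: excluded_middle_informative => p; case: excluded_middle_informative => q //.
- by case: q; exact: pq.
- by case: p; exact: qp.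
Qed.

Theorem lemma4p3 (F : finFieldType) (m : nat) (lam : seq nat) (d1 d2 : F) :
  (2 <= m)%N ->
  is_partition m lam ->
  (exists f : {poly F}, in_S lam f) ->
  in_D lam d1 -> in_D lam d2 ->
  (exists x : F, x != 0 /\ d2 / d1 = x ^+ (gcdn (#|F| - 1) (m * (m - 1)))) ->
  count_S_disc m lam d1 = count_S_disc m lam d2.
Proof.
move=> m2 _ _ _ _ [x [x0 hx]].
have d10 : d1 != 0.
  apply/eqP => d0; move: hx; rewrite d0 invr0 mulr0 => /esym/eqP.
  by rewrite expf_eq0 (negbTE x0) andbF.
have hd2 : d2 = d1 * x ^+ gcdn (#|F| - 1) (m * (m - 1)).
  by rewrite -hx mulrC divfK.
have kpos : (0 < m * m.-1)%N by rewrite muln_gt0; apply/andP; split; lia.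
have Fpos : (0 < #|F|)%N by apply/card_gt0P; exists 0.
have xn : x ^+ (#|F| - 1) = 1.
  apply: (mulIf x0); rewrite mul1r -exprSr subn1 prednK //; exact: expf_card.
case: (egcdnP (#|F| - 1) kpos) => km kn hk _.
pose c := x ^+ km.
have c0 : c != 0 by rewrite expf_neq0.
have ck : c ^+ (m * m.-1) = x ^+ gcdn (#|F| - 1) (m * (m - 1)).
  by rewrite /c -exprM hk exprD [(kn * _)%N]mulnC exprM xn expr1n mul1r gcdnC !subn1.
rewrite hd2 -ck.
pose T := fun t : m.-tuple F => [tuple (Sc c (monic_of t))`_i | i < m].
have TE : forall t, monic_of (T t) = Sc c (monic_of t).
  move=> t; apply: monic_of_recon; first exact: Sc_monic (monic_of_monic t).
  by rewrite size_Sc // size_monic_of.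
have Tinj : injective T.
  by move=> t1 t2 /(congr1 (@monic_of F m)); rewrite !TE => /(Sc_inj c0) /monic_of_inj.
rewrite /count_S_disc -[RHS](card_preimset _ Tinj).
apply: eq_card => t; rewrite !inE; apply: asbE; split.
  move=> [hS hD]; rewrite TE; split; first exact: fact_Sc.
  by have := disc_Sc c0 (monic_of_monic t) hD; rewrite size_monic_of.
have ci : c^-1 != 0 by rewrite invr_eq0.
rewrite TE => -[hS hD]; split.
  by have := fact_Sc ci hS; rewrite ScK.
have := disc_Sc ci (Sc_monic c0 (monic_of_monic t)) hD.
by rewrite ScK // size_Sc // size_monic_of /= -mulrA -exprMn mulfV // expr1n mulr1.
Qed.
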